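(* Let $d\ge2$ and $n\ge1$. Then $$\dim_{\mathbb C}\big(A_{d,n}/R'(1)\big)=(2^{n-1}-1)d^2-(2^{n-1}-2)d,$$ and the images in $A_{d,n}/R'(1)$ of the monomials in $$\mathcal{B}_{d,n}(1)=\Big\{x_i^ax_{i+1}^b\prod_{j=i+2}^n x_j^{\epsilon_j}\;\Big|\;1\le i<n,\ 1\le a<d,\ 0\le b<d,\ \epsilon_j\in\{0,1\}\Big\}\cup\{x_n^b\mid 0\le b<d\}$$ form a basis of $A_{d,n}/R'(1)$. (For $d=2$, $\mathcal{B}_{2,n}(1)$ is the set of all monomials $x_1^{r_1}\cdots x_n^{r_n}$, $r_j\in\{0,1\}$; for $d>2$ it is the set of monomials $x_1^{r_1}\cdots x_n^{r_n}$, $r_j\in\{0,\dots,d-1\}$, not divisible by $x_ix_k^2$ for any $i<k$ with $k-i\ge2$.)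
   Context: $A_{d,n}$ is the complex group algebra of $(\mathbb Z/d\mathbb Z)^n$ with commuting generators $x_1,\dots,x_n$ satisfying $x_j^d=1$; it has basis the monomials $x_1^{r_1}\cdots x_n^{r_n}$, $r_j\in\{0,\dots,d-1\}$. A monomial $x_1^{a_1}\cdots x_n^{a_n}$ divides $x_1^{b_1}\cdots x_n^{b_n}$ (both with exponents in $\{0,\dots,d-1\}$) if $a_i\le b_i$ for all $i$. $R'(1)$ is the ideal of $A_{d,n}$ generated by the elements $(x_i-x_j)(x_i-x_k)(x_j-x_k)$ for $1\le i<j<k\le n$. *)

(* Defs.v *)
From HB Require Import structures.
From mathcomp Require Import all_boot all_order all_algebra all_field.
Set Implicit Arguments. Unset Strict Implicit. Unset Printing Implicit Defensive.
Import GRing.Theory Num.Theory.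
Local Open Scope ring_scope.

(* Exponent vectors (r_1,...,r_n) with r_j in {0,...,d-1}: the monomials
   x_1^{r_1}...x_n^{r_n}, i.e. the group elements of (Z/dZ)^n. *)
Definition expo (d n : nat) := {ffun 'I_n -> 'I_d}.

(* The complex group algebra A_{d,n} = C[(Z/dZ)^n], realised as the
   C-vector space of functions (Z/dZ)^n -> C (coefficients on the monomial
   basis); complex numbers are MathComp's algC. *)
Definition A (d n : nat) := {ffun expo d n -> algC^o}.

(* product of A_{d,n}: convolution, using x_j^d = 1 (exponents added mod d) *)
Definition amul (d n : nat) (f g : A d n) : A d n :=
  [ffun m : expo d n => \sum_(m1 : expo d n) \sum_(m2 : expo d n
     | [forall j, ((m1 j + m2 j) %% d)%N == (m j : nat)]) f m1 * g m2].

Definition mono (d n : nat) (r : expo d n) : A d n :=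
  [ffun m : expo d n => (m == r)%:R].

Definition xvar (d n : nat) (i : 'I_n) : A d n :=
  [ffun m : expo d n =>
     ((m i == 1%N :> nat) && [forall j, (j != i) ==> (m j == 0%N :> nat)])%:R].

Definition gen3 (d n : nat) (i j k : 'I_n) : A d n :=
  amul (amul (xvar d i - xvar d j) (xvar d i - xvar d k)) (xvar d j - xvar d k).

(* In the commutative
   algebra A_{d,n} with monomial basis, the ideal generated by a set S is the
   C-linear span of the products (monomial) * s, s in S. *)
Definition Rp1 (d n : nat) : {vspace A d n} :=
  <<[seq amul (mono r) (gen3 d t.1.1 t.1.2 t.2)
     | r <- enum (expo d n),
       t <- enum [pred t : 'I_n * 'I_n * 'I_n | (t.1.1 < t.1.2 < t.2)%N]]>>%VS.

(* membership of x^r in B_{d,n}(1) (indices 0-based: x_1..x_n are 0..n-1) *)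
Definition inB (d n : nat) (r : expo d n) : bool :=
  [exists i : 'I_n, [&& (i.+1 < n)%N, (0 < r i)%N,
       [forall j : 'I_n, (j < i)%N ==> (r j == 0%N :> nat)] &
       [forall j : 'I_n, (i.+1 < j)%N ==> (r j <= 1)%N]]]
  || [forall j : 'I_n, (j.+1 < n)%N ==> (r j == 0%N :> nat)].

Definition Bfam (d n : nat) : seq (A d n) :=
  [seq mono r | r <- enum [pred r : expo d n | inB r]].

(* Main.v *)
Require Import Defs.
From HB Require Import structures.
From mathcomp Require Import all_boot all_order all_algebra all_field.
From mathcomp Require Import zify ring.
Import GRing.Theory Num.Theory.
Local Open Scope ring_scope.
Module M0.
Set Implicit Arguments. Unset Strict Implicit. Unset Printing Implicit Defensive.
Import GRing.Theory Num.Theory.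
Local Open Scope ring_scope.

Lemma zm6 (V : zmodType) (a b c e f g h : V) :
  a - h + c - b + h - g + f - e = c + (a - b - e + f - g).
Proof.
rewrite (addrAC a (-h) c) (addrAC (a + c) (-h) (-b)) subrK.
rewrite (addrC a c) -!addrA; congr (_ + _); rewrite !addrA.
rewrite (addrAC _ (-g) f) (addrAC _ (-g) (-e)) (addrAC _ f (-e)).
by [].
Qed.

Section Alg.
Variables (d' n : nat).
Local Notation d := d'.+2.
Local Notation E := (expo d n).
Local Notation AA := (A d n).

Lemma amulE (f g : AA) m : amul f g m =
  \sum_(m1 : E) \sum_(m2 : E | m1 + m2 == m) f m1 * g m2.
Proof.
rewrite ffunE; apply: eq_bigr => m1 _; apply: eq_bigl => m2.
apply/forallP/eqP => [H|<- j]; last by rewrite ffunE.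
by apply/ffunP => j; apply/val_inj; rewrite ffunE /=; apply/eqP/H.
Qed.

Lemma amulDl (f g h : AA) : amul (f + g) h = amul f h + amul g h.
Proof.
apply/ffunP => m; rewrite !amulE [in RHS]ffunE !amulE -big_split /=.
apply: eq_bigr => m1 _; rewrite -big_split; apply: eq_bigr => m2 _.
by rewrite ffunE mulrDl.
Qed.

Lemma amulDr (f g h : AA) : amul h (f + g) = amul h f + amul h g.
Proof.
apply/ffunP => m; rewrite !amulE [in RHS]ffunE !amulE -big_split /=.
apply: eq_bigr => m1 _; rewrite -big_split; apply: eq_bigr => m2 _.
by rewrite ffunE mulrDr.
Qed.

Lemma amulNl (f h : AA) : amul (- f) h = - amul f h.
Proof.
apply/ffunP => m; rewrite !amulE [in RHS]ffunE !amulE -sumrN; apply: eq_bigr => m1 _.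
rewrite -sumrN; apply: eq_bigr => m2 _; by rewrite ffunE mulNr.
Qed.

Lemma amulNr (f h : AA) : amul h (- f) = - amul h f.
Proof.
apply/ffunP => m; rewrite !amulE [in RHS]ffunE !amulE -sumrN; apply: eq_bigr => m1 _.
rewrite -sumrN; apply: eq_bigr => m2 _; by rewrite ffunE mulrN.
Qed.

Lemma amulBl (f g h : AA) : amul (f - g) h = amul f h - amul g h.
Proof. by rewrite amulDl amulNl. Qed.
Lemma amulBr (f g h : AA) : amul h (f - g) = amul h f - amul h g.
Proof. by rewrite amulDr amulNr. Qed.

Lemma amul_mono (r s : E) : amul (mono r) (mono s) = mono (r + s).
Proof.
apply/ffunP => m; rewrite amulE ffunE (bigD1 r) //=.
rewrite [X in _ + X]big1 => [|m1 /negbTE H]; last first.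
  by apply: big1 => m2 _; rewrite ffunE H mul0r.
rewrite addr0; case: (eqVneq (r + s) m) => [<-|Hm].
  rewrite (bigD1 s) //= big1 => [|m2 /andP [_ /negbTE H]]; last by rewrite !ffunE H mulr0.
  by rewrite !ffunE !eqxx mul1r addr0.
rewrite big1 // => m2 /eqP Em; rewrite !ffunE.
case: (eqVneq m2 s) => [E2|]; last by rewrite mulr0.
by move: Hm; rewrite -Em E2 eqxx.
Qed.

Definition eu (i : 'I_n) : E := [ffun j => (j == i)%:R].

Lemma xvar_mono i : xvar d i = mono (eu i).
Proof.
apply/ffunP => m; rewrite !ffunE; congr ((nat_of_bool _)%:R); apply/idP/eqP => [/andP [/eqP H1 /forallP H2]|->].
  apply/ffunP => j; apply/val_inj; rewrite ffunE; case: (eqVneq j i) => [->|ne] /=.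
    by rewrite H1.
  by move: (H2 j); rewrite ne => /eqP.
rewrite ffunE eqxx /=; apply/forallP => j; rewrite ffunE.
by case: (j == i).
Qed.

Lemma gen3E (i j k : 'I_n) : gen3 d i j k =
  mono (eu i + eu k + eu k) + (mono (eu i + eu i + eu j) - mono (eu i + eu i + eu k)
  - mono (eu i + eu j + eu j) + mono (eu j + eu j + eu k) - mono (eu j + eu k + eu k)).
Proof.
rewrite /gen3 !xvar_mono !amulBl !amulBr !amul_mono !amulBl !amul_mono.
have -> : eu j + eu i + eu k = eu i + eu k + eu j by rewrite [RHS]addrAC (addrC (eu j) (eu i)).
have -> : eu j + eu i + eu j = eu i + eu j + eu j by rewrite (addrC (eu j) (eu i)).
have -> : eu j + eu k + eu j = eu j + eu j + eu k by rewrite addrAC.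
by rewrite !opprB !addrA zm6 !addrA.
Qed.

Lemma valE (x : 'I_d) (a b : nat) : (a <= x)%N -> (x - a + b < d)%N ->
  nat_of_ord (x - a%:R + b%:R : 'I_d) = (x - a + b)%N.
Proof.
move=> ha hb; rewrite -{1}(natr_Zp x) -natrB // -natrD Zp_nat /=.
by rewrite modn_small.
Qed.

Lemma vk (x : 'I_d) (a b : nat) : (a <= x)%N -> (b < a)%N ->
  (nat_of_ord ((x - a%:R + b%:R)%R : 'I_d) < x)%N.
Proof. move=> h1 h2; have hx := ltn_ord x; rewrite valE; lia. Qed.

Lemma euE (p q s : 'I_n) l :
  (eu p + eu q + eu s) l = ((l == p) + (l == q) + (l == s))%N%:R.
Proof. by rewrite !ffunE !natrD. Qed.

Section Span.
Variable W : {vspace AA}.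
Hypothesis HB : forall r : E, inB r -> mono r \in W.
Hypothesis HR : forall (r : E) (i j k : 'I_n), (i < j < k)%N ->
  amul (mono r) (gen3 d i j k) \in W.

Definition ex (i : nat) (r : E) : nat := \sum_(l : 'I_n | (i.+1 < l)%N) (r l).-1.

Lemma exk (i : nat) (k : 'I_n) (r s : E) : (i.+1 < k)%N ->
  (forall l : 'I_n, (i.+1 < l)%N -> l != k -> s l = r l) ->
  (ex i s + (r k).-1 = ex i r + (s k).-1)%N.
Proof.
move=> hk H; rewrite /ex (bigD1 k) //= [X in (_ = X + _)%N](bigD1 k) //=.
rewrite (eq_bigr (fun l => (r l).-1)) => [|l /andP [hl hlk]]; last by rewrite H.
set X := bigop _ _ _; lia.
Qed.

Lemma span_from t : forall i, (i + t)%N = n.-1 -> forall r : E,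
  (forall l : 'I_n, (l < i)%N -> r l = 0) -> mono r \in W.
Proof.
elim: t => [|t IHt] i hit r0 hr0.
  apply: HB; apply/orP; right; apply/forallP => l; apply/implyP => hl.
  by rewrite hr0 //; lia.
have hin : (i.+1 < n)%N by lia.
have hi : (i < n)%N by lia.
pose io := Ordinal hi; pose jo := Ordinal hin.
suff H : forall m (r : E), (forall l : 'I_n, (l < i)%N -> r l = 0) ->
    (ex i r * d + r io < m)%N -> mono r \in W.
  exact: (H _ r0 hr0 (ltnSn _)).
elim=> [|m IHm] r hr //= hm.
case: (eqVneq (r io) 0) => [hrz|hrn0].
  apply: (IHt i.+1); first lia.
  move=> l hl; case: (ltngtP l i) => [hli||hli]; [exact: hr|lia|].
  by have -> : l = io by apply/val_inj.
have hri : (0 < r io)%N.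
  by rewrite lt0n; apply: contra hrn0 => /eqP h; apply/eqP/val_inj.
case: (pickP (fun k : 'I_n => (i.+1 < k)%N && (1 < r k)%N)) =>
    [k /andP [hk hrk]|hnone]; last first.
  apply: HB; apply/orP; left; apply/existsP; exists io; apply/and4P; split => //=.
  - by apply/forallP => l; apply/implyP => hl; rewrite hr.
  - apply/forallP => l; apply/implyP => hl; move: (hnone l); rewrite hl /=.
    by move/negbT; rewrite -leqNgt.
have hrkd := ltn_ord (r k).
have hriod := ltn_ord (r io).
have nik : k != io by apply/negP => /eqP e; rewrite e /= in hk; lia.
have njk : k != jo by apply/negP => /eqP e; rewrite e /= in hk; lia.
have nij : io != jo by apply/negP => /eqP e; have := congr1 val e => /=; lia.
pose r' := r - (eu io + eu k + eu k).
have Hr : r = r' + (eu io + eu k + eu k) by rewrite subrK.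
have hG := HR r' (i:=io) (j:=jo) (k:=k) (ltac:(apply/andP; split => /=; lia)).
rewrite gen3E !(amulDr, amulBr, amulNr) !amul_mono -Hr in hG.
have sE : forall (p q u : 'I_n) l, (r' + (eu p + eu q + eu u)) l =
    r l - ((l == io) + (l == k) + (l == k))%N%:R + ((l == p) + (l == q) + (l == u))%N%:R.
  by move=> p q u l; rewrite !ffunE !natrD.
have sO : forall (p q u : 'I_n) (l : 'I_n), p \in [:: io; jo; k] -> q \in [:: io; jo; k] ->
    u \in [:: io; jo; k] -> l != io -> l != jo -> l != k ->
    (r' + (eu p + eu q + eu u)) l = r l.
  move=> p q u l hp hq hu h1 h2 h3; rewrite sE (negbTE h1) (negbTE h3).
  have hx : forall x, x \in [:: io; jo; k] -> (l == x) = false.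
    move=> x; rewrite !inE => /or3P [] /eqP ->; exact: negbTE.
  by rewrite (hx p hp) (hx q hq) (hx u hu) /= subr0 addr0.
have meas : forall s : E, (forall l : 'I_n, l != io -> l != jo -> l != k -> s l = r l) ->
    ((nat_of_ord (s k) < r k)%N \/ (s k = r k /\ (nat_of_ord (s io) < r io)%N)) ->
    (ex i s * d + s io < m)%N.
  move=> s Hs Hc.
  have hex := @exk i k r s hk (fun l hl hlk => Hs l
     (ltac:(apply/negP => /eqP e; rewrite e /= in hl; lia))
     (ltac:(apply/negP => /eqP e; rewrite e /= in hl; lia)) hlk).
  have hsd : (s io < d)%N := ltn_ord _.
  case: Hc => [hlt|[heq hlt]].
    have hlt2 : (ex i s < ex i r)%N by move: hex; rewrite -!subn1; lia.
    have : ((ex i s).+1 * d <= ex i r * d)%N by rewrite leq_mul2r hlt2 orbT.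
    rewrite mulSn; lia.
  rewrite heq in hex; have -> : ex i s = ex i r by lia.
  lia.
have zb : forall s : E, (forall l : 'I_n, l != io -> l != jo -> l != k -> s l = r l) ->
    forall l : 'I_n, (l < i)%N -> s l = 0.
  move=> s Hs l hl; rewrite Hs ?hr //; apply/negP => /eqP e; rewrite e /= in hl; lia.
have T : forall (p q u : 'I_n), p \in [:: io; jo; k] -> q \in [:: io; jo; k] ->
    u \in [:: io; jo; k] ->
    let s := r' + (eu p + eu q + eu u) in
    ((nat_of_ord (s k) < r k)%N \/ (s k = r k /\ (nat_of_ord (s io) < r io)%N)) -> mono s \in W.
  move=> p q u hp hq hu s hc; apply: IHm.
    by apply: zb => l h1 h2 h3; apply: sO.
  by apply: meas => // l h1 h2 h3; apply: sO.
have hk1 : (k == io) = false by apply: negbTE.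
have hk2 : (k == jo) = false by apply: negbTE.
have hi2 : (io == jo) = false by apply: negbTE.
have hi3 : (io == k) = false by rewrite eq_sym.
have in1 : io \in [:: io; jo; k] by rewrite !inE eqxx.
have in2 : jo \in [:: io; jo; k] by rewrite !inE eqxx orbT.
have in3 : k \in [:: io; jo; k] by rewrite !inE eqxx !orbT.
have T1 : mono (r' + (eu io + eu io + eu jo)) \in W.
  by apply: (T) => //; left; rewrite sE ?hk1 ?hk2 ?hi2 ?hi3 ?eqxx; apply: vk.
have T2 : mono (r' + (eu io + eu io + eu k)) \in W.
  by apply: (T) => //; left; rewrite sE ?hk1 ?hk2 ?hi2 ?hi3 ?eqxx; apply: vk.
have T3 : mono (r' + (eu io + eu jo + eu jo)) \in W.
  by apply: (T) => //; left; rewrite sE ?hk1 ?hk2 ?hi2 ?hi3 ?eqxx; apply: vk.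
have T4 : mono (r' + (eu jo + eu jo + eu k)) \in W.
  by apply: (T) => //; left; rewrite sE ?hk1 ?hk2 ?hi2 ?hi3 ?eqxx; apply: vk.
have T5 : mono (r' + (eu jo + eu k + eu k)) \in W.
  apply: (T) => //; right; split.
    by rewrite sE ?hk1 ?hk2 ?hi2 ?hi3 ?eqxx subrK.
  by rewrite sE ?hk1 ?hk2 ?hi2 ?hi3 ?eqxx; apply: vk.
have memA : forall x y, x + y \in W -> y \in W -> x \in W.
  by move=> x y h1 h2; rewrite -(addrK y x); apply: memvB.
apply: (memA _ _ hG).
apply: memvB => //; apply: memvD => //; apply: memvB => //; apply: memvB => //.
Qed.

Lemma span_all (r : E) : mono r \in W.
Proof.
case: (posnP n) => [n0|npos].
  apply: HB; apply/orP; right; apply/forallP => l; have := ltn_ord l.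
  by rewrite {2}n0.
by apply: (span_from (t := n.-1) (i := 0)).
Qed.
End Span.
End Alg.

End M0.
Import M0.

Module M1.
Set Implicit Arguments. Unset Strict Implicit. Unset Printing Implicit Defensive.
Import GRing.Theory Num.Theory.
Local Open Scope ring_scope.

Section Char.
Variables (d' n : nat).
Local Notation d := d'.+2.
Local Notation E := (expo d n).
Local Notation AA := (A d n).
Variable w : algC.
Hypothesis hw : d.-primitive_root w.

Definition chi (m p : E) : algC := \prod_(j : 'I_n) (w ^+ p j) ^+ m j.
Definition evp (p : E) (f : AA) : algC := \sum_(m : E) f m * chi m p.

Lemma wd (a : nat) : (w ^+ a) ^+ d = 1.
Proof. by rewrite -exprM mulnC exprM (prim_expr_order hw) expr1n. Qed.

Lemma chiD (r s p : E) : chi (r + s) p = chi r p * chi s p.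
Proof.
rewrite /chi -big_split /=; apply: eq_bigr => j _.
by rewrite ffunE /= expr_mod ?wd // exprD.
Qed.

Lemma chiDr (m p q : E) : chi m (p + q) = chi m p * chi m q.
Proof.
rewrite /chi -big_split /=; apply: eq_bigr => j _.
by rewrite ffunE /= prim_expr_mod // -exprMn -exprD.
Qed.

Lemma evp_is_linear p : scalar (evp p).
Proof.
move=> a f g; rewrite /evp mulr_sumr -big_split /=; apply: eq_bigr => m _.
by rewrite !ffunE mulrDl mulrA.
Qed.

HB.instance Definition _ p := GRing.isLinear.Build algC AA algC *%R (evp p)
  (evp_is_linear p).

Lemma evp_mono p s : evp p (mono s) = chi s p.
Proof.
rewrite /evp (bigD1 s) //= big1 => [|m /negbTE h]; last by rewrite ffunE h mul0r.
by rewrite ffunE eqxx mul1r addr0.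
Qed.

Lemma evp_amul p f g : evp p (amul f g) = evp p f * evp p g.
Proof.
rewrite /evp.
transitivity (\sum_(m1 : E) \sum_(m2 : E) f m1 * g m2 * chi (m1 + m2) p).
  rewrite [RHS](eq_bigr (fun m1 => \sum_(m : E) \sum_(m2 : E)
      (if m1 + m2 == m then f m1 * g m2 * chi m p else 0))); last first.
    move=> m1 _; rewrite exchange_big /=; apply: eq_bigr => m2 _.
    rewrite (bigD1 (m1 + m2)) //= eqxx big1 ?addr0 // => m /negbTE h.
    by rewrite eq_sym h.
  rewrite exchange_big /=; apply: eq_bigr => m _.
  rewrite amulE big_distrl /=; apply: eq_bigr => m1 _.
  rewrite big_distrl /= big_mkcond /=; apply: eq_bigr => m2 _.
  by case: ifP => _; rewrite ?mul0r.
rewrite big_distrl /=; apply: eq_bigr => m1 _; rewrite big_distrr /=.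
by apply: eq_bigr => m2 _; rewrite chiD; ring.
Qed.

Lemma chi_eu (i : 'I_n) p : chi (@eu d' n i) p = w ^+ p i.
Proof.
rewrite /chi (bigD1 i) //= big1 => [|j hj]; last by rewrite ffunE (negbTE hj) expr0.
by rewrite ffunE eqxx mulr1.
Qed.

Lemma evp_xvar i p : evp p (xvar d i) = w ^+ p i.
Proof. by rewrite xvar_mono evp_mono chi_eu. Qed.

Lemma three0 (a b x y z : algC) : (x = a \/ x = b) -> (y = a \/ y = b) ->
  (z = a \/ z = b) -> (x - y) * (x - z) * (y - z) = 0.
Proof.
by case=> ->; case=> ->; case=> ->; rewrite !subrr ?(mul0r, mulr0).
Qed.

Lemma evp_gen (p : E) (u v : 'I_d) (hp : forall l, p l = u \/ p l = v) (r : E) (i j k : 'I_n) :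
  evp p (amul (mono r) (gen3 d i j k)) = 0.
Proof.
rewrite evp_amul /gen3 !evp_amul !linearB /= !evp_xvar.
have H : forall l, w ^+ p l = w ^+ u \/ w ^+ p l = w ^+ v.
  by move=> l; case: (hp l) => ->; [left|right].
by rewrite (three0 (H i) (H j) (H k)) mulr0.
Qed.

Lemma geo (c : 'I_d) : \sum_(a : 'I_d) (w ^+ c) ^+ a = (c == 0)%:R * d%:R.
Proof.
case: (eqVneq c 0) => [->|hc].
  by rewrite expr0 (eq_bigr (fun _ => 1)) => [|a _]; rewrite ?expr1n // sumr_const card_ord mul1r.
rewrite mul0r.
have hz : w ^+ c - 1 != 0.
  rewrite subr_eq0 -(prim_order_dvd hw); apply/negP => /dvdnP [q hq].
  have := ltn_ord c; rewrite hq; case: q hq => [|q] hq.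
    by move: hc; rewrite -(inj_eq val_inj) /= hq eqxx.
  rewrite mulSn; lia.
have := subrX1 (w ^+ c) d; rewrite wd subrr => /esym /eqP.
rewrite mulf_eq0 (negbTE hz) /= => /eqP H.
by rewrite -[RHS]H; apply: eq_bigr.
Qed.

Lemma sum_chi (c : E) : \sum_(m : E) chi m c = (c == 0)%:R * d%:R ^+ n.
Proof.
rewrite /chi -(bigA_distr_bigA (fun j (a : 'I_d) => (w ^+ c j) ^+ a)) /=.
under eq_bigr => j _ do rewrite geo.
case: (eqVneq c 0) => [->|hc].
  rewrite mul1r (eq_bigr (fun _ => d%:R)) => [|j _]; last by rewrite ffunE eqxx mul1r.
  by rewrite prodr_const card_ord.
rewrite mul0r; have [j hj] : exists j, c j != 0.
  apply/existsP; apply: contraR hc => /existsPn H; apply/eqP/ffunP => j.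
  by have := H j; rewrite negbK ffunE => /eqP.
by rewrite (bigD1 j) //= (negbTE hj) !mul0r.
Qed.

Definition ee (q : E) : AA := \sum_(m : E) chi m (- q) *: mono m.

Lemma evp_ee p q : evp p (ee q) = (p == q)%:R * d%:R ^+ n.
Proof.
rewrite linear_sum /=.
under eq_bigr => m _ do rewrite linearZ /= evp_mono -chiDr.
by rewrite sum_chi addrC subr_eq0.
Qed.
End Char.

End M1.
Import M1.

Module M2.
Set Implicit Arguments. Unset Strict Implicit. Unset Printing Implicit Defensive.
Import GRing.Theory Num.Theory.
Local Open Scope ring_scope.

Section Phi.
Variables (d' n' : nat).
Local Notation d := d'.+2.
Local Notation n := n'.+1.
Local Notation E := (expo d n).

Definition cond (r : E) (i : 'I_n) : bool :=
  [&& (i.+1 < n)%N, (0 < r i)%N,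
       [forall j : 'I_n, (j < i)%N ==> (r j == 0%N :> nat)] &
       [forall j : 'I_n, (i.+1 < j)%N ==> (r j <= 1)%N]].

Definition type2 (r : E) : bool := [forall j : 'I_n, (j.+1 < n)%N ==> (r j == 0%N :> nat)].

Lemma inBE r : inB r = [exists i, cond r i] || type2 r.
Proof. by []. Qed.

Definition phi (r : E) : E :=
  if [pick i | cond r i] is Some i then
    [ffun l : 'I_n => r (inord i.+1) + r i *
       (if (l <= i)%N then 0 else if l == inord i.+1 then 1 else r l)]
  else [ffun _ => r ord_max].

Lemma cond_uniq r i i' : cond r i -> cond r i' -> i = i'.
Proof.
move=> /and4P [h1 h2 /forallP h3 h4] /and4P [h1' h2' /forallP h3' h4'].
apply/val_inj; case: (ltngtP i i') => // hlt.
  by move: (h3' i); rewrite hlt /= => /eqP e; rewrite e in h2.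
by move: (h3 i'); rewrite hlt /= => /eqP e; rewrite e in h2'.
Qed.

Lemma cond_type2 r i : cond r i -> ~~ type2 r.
Proof.
move=> /and4P [h1 h2 _ _]; apply/forallP => /(_ i); rewrite h1 /= => /eqP e.
by rewrite e in h2.
Qed.

Lemma inord1 (i : 'I_n) : (i.+1 < n)%N -> nat_of_ord (inord i.+1 : 'I_n) = i.+1.
Proof. by move=> h; rewrite inordK. Qed.

Lemma phi1 r i : cond r i -> phi r = [ffun l : 'I_n => r (inord i.+1) + r i *
       (if (l <= i)%N then 0 else if l == inord i.+1 then 1 else r l)].
Proof.
rewrite /phi => hc; case: pickP => [i' hi'|]; last by move/(_ i); rewrite hc.
by rewrite (cond_uniq hi' hc).
Qed.

Lemma phi2 r : type2 r -> phi r = [ffun _ => r ord_max].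
Proof.
rewrite /phi => ht; case: pickP => [i' hi'|//].
by move: (cond_type2 hi'); rewrite ht.
Qed.

Lemma r01 (x : 'I_d) : (x <= 1)%N -> x = 0 \/ x = 1.
Proof.
case: x => [[|[|m]] hm] h //=; [left|right]; exact/val_inj.
Qed.

Lemma phi_two r : inB r -> exists u v : 'I_d, forall l, phi r l = u \/ phi r l = v.
Proof.
rewrite inBE => /orP [/existsP [i hc]|ht]; last first.
  by exists (r ord_max), 0; move=> l; left; rewrite phi2 // ffunE.
rewrite (phi1 hc); exists (r (inord i.+1)), (r (inord i.+1) + r i) => l; rewrite ffunE.
case: ifP => hl1; first by left; rewrite mulr0 addr0.
case: ifP => hl2; first by right; rewrite mulr1.
move: hc => /and4P [hi _ _ /forallP h4].
have hl : (i.+1 < l)%N.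
  move: hl2 => /negbT; rewrite -(inj_eq val_inj) /= inord1 // => hne.
  move: hl1 => /negbT; rewrite -ltnNge; lia.
move: (h4 l); rewrite hl /= => /r01 [->|->]; [left|right].
  by rewrite mulr0 addr0.
by rewrite mulr1.
Qed.

Lemma phiA r i (l : 'I_n) : cond r i -> (l <= i)%N -> phi r l = r (inord i.+1).
Proof. by move=> hc hl; rewrite (phi1 hc) ffunE hl mulr0 addr0. Qed.

Lemma phiB r i : cond r i -> phi r (inord i.+1) = r (inord i.+1) + r i.
Proof.
move=> hc; have hi : (i.+1 < n)%N by case/and4P: hc.
by rewrite (phi1 hc) ffunE inord1 // ltnn eqxx mulr1.
Qed.

Lemma phiC r i (l : 'I_n) : cond r i -> (i.+1 < l)%N -> phi r l = r (inord i.+1) + r i * r l.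
Proof.
move=> hc hl; have hi : (i.+1 < n)%N by case/and4P: hc.
rewrite (phi1 hc) ffunE ifF; last by apply/negbTE; rewrite -ltnNge; lia.
rewrite ifF //; apply/negbTE; rewrite -(inj_eq val_inj) /= inord1 //; lia.
Qed.

Lemma cond_nz r i : cond r i -> r i != 0.
Proof.
case/and4P => _ h _ _; apply/negP => /eqP e; by rewrite e in h.
Qed.

Lemma L1 r s i : cond r i -> phi r = phi s -> inB s -> exists2 i', cond s i' & (i <= i')%N.
Proof.
move=> hc e; rewrite inBE => /orP [/existsP [i' hc']|ht].
  exists i' => //; rewrite leqNgt; apply/negP => hlt.
  have hi' : (i'.+1 < n)%N by case/and4P: hc'.
  have e1 := phiA hc (l := ord0) (leq0n _).
  have e2 := phiA hc (l := inord i'.+1) (ltac:(rewrite inord1 //)).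
  rewrite e (phiA hc' (l := ord0) (leq0n _)) in e1; rewrite e (phiB hc') -e1 in e2.
  have h0 : s i' = 0 by apply: (addrI (s (inord i'.+1))); rewrite addr0.
  by move: (cond_nz hc'); rewrite h0 eqxx.
have hi : (i.+1 < n)%N by case/and4P: hc.
have e1 := phiB hc; have e2 := phiA hc (l := ord0) (leq0n _).
rewrite e (phi2 ht) ffunE in e1; rewrite e (phi2 ht) ffunE e1 in e2.
have h0 : r i = 0 by apply: (addrI (r (inord i.+1))); rewrite addr0.
by move: (cond_nz hc); rewrite h0 eqxx.
Qed.

Lemma L2 r s i : cond r i -> cond s i -> phi r = phi s -> r = s.
Proof.
move=> hc hc' e.
have hi : (i.+1 < n)%N by case/and4P: hc.
have eb : r (inord i.+1) = s (inord i.+1).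
  by rewrite -(phiA hc (l := ord0)) // -(phiA hc' (l := ord0)) // e.
have ea : r i = s i by apply: (addrI (r (inord i.+1))); rewrite -phiB // e phiB // eb.
have na := cond_nz hc.
move: (hc) (hc') => /and4P [_ _ /forallP h3 /forallP h4] /and4P [_ _ /forallP h3' /forallP h4'].
apply/ffunP => l; case: (ltngtP l i) => [hl|hl|hl].
- move: (h3 l) (h3' l); rewrite hl /= => /eqP e1 /eqP e2; apply/val_inj; by rewrite /= e1 e2.
- case: (eqVneq (nat_of_ord l) i.+1) => [hl1|hl1].
    by have -> : l = inord i.+1 by apply/val_inj; rewrite /= inord1.
  have hl2 : (i.+1 < l)%N by lia.
  have := phiC hc hl2; rewrite e (phiC hc' hl2) -eb ea => /addrI.
  move: (h4 l) (h4' l); rewrite hl2 /= => /r01 [] -> /r01 [] -> //.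
    by rewrite mulr0 mulr1 -ea => /eqP; rewrite ?[0 == _]eq_sym (negbTE na).
  by rewrite mulr0 mulr1 -ea => /eqP; rewrite ?[0 == _]eq_sym (negbTE na).
- by have -> : l = i by apply/val_inj.
Qed.

Lemma L3 r s : type2 r -> type2 s -> phi r = phi s -> r = s.
Proof.
move=> hr hs e; have em : r ord_max = s ord_max.
  by move: (congr1 (fun f : E => f ord_max) e); rewrite (phi2 hr) (phi2 hs) !ffunE.
apply/ffunP => l; case: (ltnP l.+1 n) => hl.
  move: hr hs => /forallP /(_ l) hr /forallP /(_ l) hs.
  move: hr hs; rewrite hl /= => /eqP e1 /eqP e2; apply/val_inj; by rewrite /= e1 e2.
by have -> : l = ord_max by apply/val_inj => /=; have := ltn_ord l; lia.
Qed.

Lemma phi_inj : {in [pred r | inB r] &, injective phi}.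
Proof.
move=> r s; rewrite !inE => hr hs e.
move: (hr); rewrite inBE => /orP [/existsP [i hc]|ht].
  have [i' hc' hii'] := L1 hc e hs.
  have [i'' hc'' hi''] := L1 hc' (esym e) hr.
  have ei : i'' = i := cond_uniq hc'' hc.
  have ei' : i' = i by apply/val_inj => /=; rewrite ei in hi''; lia.
  by rewrite ei' in hc'; apply: (L2 hc hc').
move: (hs); rewrite inBE => /orP [/existsP [i hc]|ht'].
  have [i' hc' _] := L1 hc (esym e) hr.
  by move: (cond_type2 hc'); rewrite ht.
exact: L3.
Qed.
End Phi.

End M2.
Import M2.

Module M3.
Set Implicit Arguments. Unset Strict Implicit. Unset Printing Implicit Defensive.
Import GRing.Theory Num.Theory.

Lemma cardlt (d k : nat) : (k <= d)%N -> #|[pred x : 'I_d | (x < k)%N]| = k.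
Proof.
move=> hk; have inj : injective (widen_ord hk) by move=> a b e; apply/val_inj; exact: (congr1 val e).
rewrite -[RHS](card_ord k) -(card_imset _ inj).
apply: eq_card => x; rewrite inE /=; apply/idP/imsetP => [hx|[y _ ->]]; last first.
  by rewrite /= ltn_ord.
by exists (Ordinal hx) => //; apply/val_inj.
Qed.

Lemma cardgt0 (d : nat) : (0 < d)%N -> #|[pred x : 'I_d | (0 < x)%N]| = d.-1.
Proof.
move=> hd; have := cardC [pred x : 'I_d | (x < 1)%N]; rewrite cardlt ?card_ord //.
have -> : #|[predC [pred x : 'I_d | (x < 1)%N]]| = #|[pred x : 'I_d | (0 < x)%N]|.
  by apply: eq_card => x; rewrite !inE /=; case: (nat_of_ord x).
lia.
Qed.

Lemma cardS (T : finType) (P : pred T) : #|P| = (\sum_(x : T) (P x : nat))%N.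
Proof.
rewrite -sum1_card big_mkcond /=; apply: eq_bigr => x _; by rewrite unfold_in; case: (P x).
Qed.

Lemma geo2 m : (\sum_(i < m) 2 ^ (m - i.+1) = 2 ^ m - 1)%N.
Proof.
elim: m => [|m IH]; first by rewrite big_ord0.
rewrite big_ord_recl /= subSS subn0.
under eq_bigr => i _ do rewrite /bump /= add1n subSS.
rewrite IH; have := expn_gt0 2 m; rewrite expnS; lia.
Qed.

Section Count.
Variables (d' n' : nat).
Local Notation d := d'.+2.
Local Notation n := n'.+1.
Local Notation E := (expo d n).

Definition Fi (i l : 'I_n) : pred 'I_d := [pred x : 'I_d | if (l < i)%N then (x < 1)%N
  else if l == i then (0 < x)%N else if (l == i.+1 :> nat) then true else (x < 2)%N].

Definition gi (i l : nat) : nat := if (l < i)%N then 1%N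
  else if l == i then d.-1 else if l == i.+1 then d else 2%N.

Lemma card_Fi (i l : 'I_n) : #|Fi i l| = gi i l.
Proof.
rewrite /gi; case: ifP => h1.
  by rewrite -(cardlt (d := d) (k := 1)) //; apply: eq_card => x; rewrite !inE h1.
case: ifP => h2.
  rewrite -(cardgt0 (d := d)) //; apply: eq_card => x; rewrite !inE h1.
  by rewrite -(inj_eq val_inj) /= h2.
have h2' : (l == i) = false by apply/negbTE; rewrite -(inj_eq val_inj) /= h2.
case: ifP => h3.
  by rewrite -[in RHS](card_ord d); apply: eq_card => x; rewrite !inE h1 h2' h3.
by rewrite -(cardlt (d := d) (k := 2)) //; apply: eq_card => x; rewrite !inE h1 h2' h3.
Qed.

Lemma card_cond (i : 'I_n) : (i.+1 < n)%N -> #|[pred r : E | cond r i]| = \prod_(l : 'I_n) gi i l.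
Proof.
move=> hi.
have := card_family (Fi i); rewrite foldrE big_map big_enum /= => e.
rewrite -(eq_bigr _ (fun l _ => card_Fi i l)) -e.
apply: eq_card => r; rewrite inE; apply/idP/familyP => [|H].
  case/and4P => _ h2 /forallP h3 /forallP h4 l; rewrite inE.
  case: ifP => hl1; first by have := h3 l; rewrite hl1 /= => /eqP ->.
  case: ifP => hl2; first by rewrite (eqP hl2).
  case: ifP => hl3 //.
  have hl : (i.+1 < l)%N.
    move: hl1 hl2 hl3 => /negbT; rewrite -leqNgt => hl1 /negbT hl2 /negbT hl3.
    rewrite -(inj_eq val_inj) /= in hl2; lia.
  by have := h4 l; rewrite hl /=.
apply/and4P; split => //.
- by have := H i; rewrite inE ltnn eqxx.
- apply/forallP => l; apply/implyP => hl; by have := H l; rewrite inE hl; case: (nat_of_ord (r l)).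
- apply/forallP => l; apply/implyP => hl; have := H l; rewrite inE.
  rewrite ifF; last by apply/negbTE; rewrite -leqNgt; lia.
  rewrite ifF; last by apply/negbTE; rewrite -(inj_eq val_inj) /=; lia.
  by rewrite ifF //; apply/negbTE; lia.
Qed.

Lemma prod_gi (i : nat) : (i.+1 < n)%N -> (\prod_(l < n) gi i l = d.-1 * d * 2 ^ (n - i.+2))%N.
Proof.
move=> hi; rewrite -(big_mkord xpredT (gi i)).
rewrite (@big_cat_nat _ _ _ i) /=; [|lia|lia].
have -> : (\prod_(0 <= l < i) gi i l = 1)%N.
  rewrite big_nat_cond big1 // => l /andP [/andP [_ h] _]; by rewrite /gi h.
rewrite mul1n big_ltn; last lia.
rewrite big_ltn; last lia.
rewrite (eq_big_nat _ _ (F2 := fun _ => 2%N)) => [|l /andP [h1 h2]]; last first.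
  rewrite /gi ifF; last lia.
  rewrite ifF; last lia.
  by rewrite ifF //; lia.
rewrite prod_nat_const_nat /gi ltnn eqxx ifF; last lia.
rewrite ifF; last lia.
by rewrite eqxx mulnA.
Qed.

Definition G2 (l : 'I_n) : pred 'I_d := [pred x : 'I_d | if (l.+1 < n)%N then (x < 1)%N else true].

Lemma card_type2 : #|[pred r : E | type2 r]| = d.
Proof.
have := card_family G2; rewrite foldrE big_map big_enum /= => e.
have -> : #|[pred r : E | type2 r]| = #|family G2|.
  apply: eq_card => r; rewrite inE; apply/idP/familyP => [/forallP H l|H].
    rewrite inE; case: ifP => // hl; by have := H l; rewrite hl /= => /eqP ->.
  apply/forallP => l; apply/implyP => hl; have := H l; rewrite inE hl.
  by case: (nat_of_ord (r l)).
rewrite e big_ord_recr /= big1 => [|l _]; last first.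
  by rewrite -(cardlt (d := d) (k := 1)) //; apply: eq_card => x; rewrite !inE /= ltnS ltn_ord.
rewrite mul1n -[RHS](card_ord d); apply: eq_card => x; by rewrite !inE ltnn.
Qed.

Lemma card_B : #|[pred r : E | inB r]| = (d + d.-1 * d * (2 ^ n' - 1))%N.
Proof.
rewrite cardS.
transitivity (\sum_(r : E) (type2 r : nat) + \sum_(r : E) \sum_(i : 'I_n) (cond r i : nat))%N.
  rewrite -big_split; apply: eq_bigr => r _ /=; rewrite inBE.
  case: (boolP [exists i, cond r i]) => [/existsP [i hc]|/existsPn hn] /=.
    rewrite (bigD1 i) //= hc big1; last first.
      by move=> i' hi'; case: (boolP (cond r i')) => // hc'; move: hi'; rewrite (cond_uniq hc' hc) eqxx.
    by rewrite (negbTE (cond_type2 hc)).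
  by rewrite big1 ?addn0 // => i _; rewrite (negbTE (hn i)).
rewrite -cardS card_type2 exchange_big /=; congr (_ + _)%N.
rewrite (eq_bigr (fun i : 'I_n => if (i.+1 < n)%N then (d.-1 * d * 2 ^ (n - i.+2))%N else 0%N))
  => [|i _]; last first.
  rewrite -cardS; case: ifP => hi; first by rewrite card_cond // prod_gi.
  apply: eq_card0 => r; rewrite inE; apply/negbTE; by rewrite /cond hi.
rewrite big_ord_recr /= ltnn addn0.
under eq_bigr => i _ do rewrite ltnS ltn_ord subSS.
by rewrite -big_distrr /= geo2.
Qed.
End Count.

End M3.
Import M3.

Module M4.
Set Implicit Arguments. Unset Strict Implicit. Unset Printing Implicit Defensive.
Import GRing.Theory Num.Theory.
Local Open Scope ring_scope.

Section Main.
Variables (d' n' : nat).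
Local Notation d := d'.+2.
Local Notation n := n'.+1.
Local Notation E := (expo d n).
Local Notation AA := (A d n).
Variable w : algC.
Hypothesis hw : d.-primitive_root w.

Definition r0 : E := [ffun _ => 0].
Definition Bs : seq E := enum [pred r : E | inB r].
Definition Xs : seq AA := [seq ee w (phi r) | r <- Bs].

Lemma size_Xs : size Xs = #|[pred r : E | inB r]|.
Proof. by rewrite size_map /Bs -cardE. Qed.

Lemma nthB (i : nat) : (i < size Bs)%N -> inB (nth r0 Bs i).
Proof. by move=> h; have := mem_nth r0 h; rewrite mem_enum inE. Qed.

Lemma evp_comb (c : 'I_(size Xs) -> algC) (j : 'I_(size Xs)) :
  evp w (phi (nth r0 Bs j)) (\sum_(i < size Xs) c i *: Xs`_i) = c j * d%:R ^+ n.
Proof.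
have hs : size Xs = size Bs by rewrite size_map.
have hj : (j < size Bs)%N by rewrite -hs.
rewrite linear_sum (bigD1 j) //= big1 ?addr0 => [|i hij].
  by rewrite linearZ /= (nth_map r0) // evp_ee // eqxx mul1r.
have hi : (i < size Bs)%N by rewrite -hs.
rewrite linearZ /= (nth_map r0) // evp_ee //.
have : nth r0 Bs j != nth r0 Bs i.
  by rewrite nth_uniq ?enum_uniq // eq_sym.
case: (eqVneq (phi (nth r0 Bs j)) (phi (nth r0 Bs i))) => [e|_ _]; last by rewrite mul0r mulr0.
by rewrite (phi_inj _ _ e) ?eqxx // inE nthB.
Qed.

Lemma dn0 : d%:R ^+ n != 0 :> algC.
Proof. by rewrite expf_eq0 pnatr_eq0 andbF. Qed.

Lemma freeX : free Xs.
Proof.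
suff : free (in_tuple Xs) by []. 
apply/freeP => k hk j.
have := congr1 (evp w (phi (nth r0 Bs j))) hk; rewrite evp_comb linear0 => /eqP.
by rewrite mulf_eq0 (negbTE dn0) orbF => /eqP.
Qed.

Lemma evp_R (p : E) (u v : 'I_d) (hp : forall l, p l = u \/ p l = v) (f : AA) :
  f \in Rp1 d n -> evp w p f = 0.
Proof.
rewrite /Rp1; set S := [seq _ | r <- _, t <- _] => hf.
rewrite (coord_span (X := in_tuple S) hf) linear_sum big1 // => i _; rewrite linearZ /=.
have /allpairsP [[r t] [_ _ ->]] : S`_i \in S by apply: mem_nth.
by rewrite (evp_gen hw hp) mulr0.
Qed.

Lemma capX : (<<Xs>> :&: Rp1 d n = 0)%VS.
Proof.
apply/eqP; rewrite -subv0; apply/subvP => v /memv_capP [hv hr]; rewrite memv0.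
have ev := coord_span (X := in_tuple Xs) hv.
have c0 : forall j, coord (in_tuple Xs) j v = 0.
  move=> j; have hs : size Xs = size Bs by rewrite size_map.
  have hj : (j < size Bs)%N by rewrite -hs.
  have [u [u' hp]] := phi_two (nthB hj).
  have := evp_R hp hr; rewrite {1}ev evp_comb => /eqP.
  by rewrite mulf_eq0 (negbTE dn0) orbF => /eqP.
by rewrite ev big1 // => j _; rewrite c0 scale0r.
Qed.
End Main.

End M4.
Import M4.

Theorem mainTheorem17 (d n : nat) (hd : (2 <= d)%N) (hn : (1 <= n)%N) :
  (* dim_C (A_{d,n} / R'(1)) = dim A_{d,n} - dim R'(1) *)
  ((\dim (fullv : {vspace A d n}) - \dim (Rp1 d n))%N)%:Z
    = ((2 ^ n.-1)%N%:Z - 1) * (d ^ 2)%N%:Z - ((2 ^ n.-1)%N%:Z - 2) * d%:Z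
  /\
  (* the images of B_{d,n}(1) form a basis of A_{d,n}/R'(1): they are
     linearly independent modulo R'(1) and span modulo R'(1) *)
  [/\ free (Bfam d n),
      directv (<<Bfam d n>> + Rp1 d n)%VS
    & (<<Bfam d n>> + Rp1 d n)%VS = fullv].
Proof.
case: d hd => [|[|d']] // _; case: n hn => [|n'] // _.
have [w hw] := C_prim_root_exists (ltn0Sn d'.+1).
set BP := [pred r : expo d'.+2 n'.+1 | inB r].
set W := (<<Bfam _ _>> + Rp1 _ _)%VS.
have HB : forall r, inB r -> mono r \in W.
  move=> r hr; apply: (subvP (addvSl _ _)); apply: memv_span; apply: map_f.
  by rewrite mem_enum.
have HR : forall r (i j k : 'I_n'.+1), (i < j < k)%N -> amul (mono r) (gen3 _ i j k) \in W.
  move=> r i j k hijk; apply: (subvP (addvSr _ _)); apply: memv_span.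
  by apply/allpairsP; exists (r, ((i, j), k)); split => //; rewrite mem_enum.
have Wf : W = fullv.
  apply/eqP; rewrite eqEsubv subvf /=; apply/subvP => f _.
  have -> : f = \sum_(r : expo _ _) f r *: mono r.
    apply/ffunP => m; rewrite sum_ffunE (bigD1 m) //= big1 => [|r hr].
      by rewrite !ffunE eqxx /= addr0; exact: (esym (mulr1 _)).
    by rewrite !ffunE eq_sym (negbTE hr) /=; exact: (mulr0 _).
  by apply: memv_suml => r _; apply: memvZ; apply: span_all.
have dB : (\dim <<Bfam d'.+2 n'.+1>> <= #|BP|)%N.
  by have := dim_span (Bfam d'.+2 n'.+1); rewrite size_map -cardE.
have dU : \dim <<Xs d' n' w>> = #|BP| :> nat.
  by have := @freeX d' n' w hw; rewrite /free (@size_Xs d' n' w) => /eqP.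
have h1 : (\dim <<Xs d' n' w>> + \dim (Rp1 d'.+2 n'.+1) <= \dim W)%N.
  by rewrite -dimv_disjoint_sum ?(@capX d' n' w hw) // Wf dimvS // subvf.
have [h2 h2e] := dimv_add_leqif <<Bfam d'.+2 n'.+1>> (Rp1 d'.+2 n'.+1).
rewrite -/W in h2 h2e.
have h12 := leq_trans h1 h2.
have eB : \dim <<Bfam d'.+2 n'.+1>> = #|BP|.
  apply/eqP; rewrite eqn_leq dB /= -dU -(leq_add2r (\dim (Rp1 d'.+2 n'.+1))).
  exact: h12.
have eF : \dim W = (#|BP| + \dim (Rp1 d'.+2 n'.+1))%N.
  apply/eqP; rewrite eqn_leq -{1}eB h2 /= -dU; exact: h1.
split; last split.
  rewrite -Wf eF addnK card_B.
  have -> : n'.+1.-1 = n' by [].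
  move: (expn_gt0 2 n') => hX; set X := (2 ^ n')%N in hX *.
  have -> : (d'.+2 ^ 2 = d'.+2 * d'.+2)%N by rewrite expnS expn1.
  rewrite -[d'.+2.-1]/(d'.+1) PoszD !PoszM -(subzn hX).
  rewrite -[d'.+2]addn2 -[d'.+1]addn1 !PoszD.
  ring.
- by rewrite /free size_map -cardE eB.
- apply/directv_addP/eqP; rewrite -subv0 -h2e eF eB; exact: eqxx.
- exact: Wf.
Qed.
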